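(* Let $\mathfrak{n}$ be a $2$-step nilpotent real Lie algebra with center $\mathfrak{z}$ and commutator $\mathfrak{n}'$, and let $J$ be a linear map with $J^2=-I$ and $J\mathfrak{n}'\subset\mathfrak{z}$. Put $\mathfrak{z}_0=\mathfrak{n}'+J\mathfrak{n}'$. Let $\langle\cdot,\cdot\rangle$ be any inner product on $\mathfrak{n}$ with $\langle Jx,Jy\rangle=\langle x,y\rangle$, let $\mathfrak{v}$ be the orthogonal complement of $\mathfrak{z}_0$ (so $\mathfrak{v}$ is $J$-invariant, $\dim\mathfrak{v}=2n$), and $J_{\mathfrak{v}}=J|_{\mathfrak{v}}$. For $z\in\mathfrak{z}_0$ define $j(z)\in\operatorname{End}(\mathfrak{v})$ by $\langle j(z)v,w\rangle=\langle z,[v,w]\rangle$ for $v,w\in\mathfrak{v}$, and $S(z)=j(Jz)-J_{\mathfrak{v}}\circ j(z)$. Then $J$ is integrable (i.e. $N_J\equiv0$) if and only if $S(z)\circ J_{\mathfrak{v}}=J_{\mathfrak{v}}\circ S(z)$ for all $z\in\mathfrak{z}_0$. Moreover, for any subspace $\mathfrak{p}\subset\mathfrak{z}_0$ with $\mathfrak{z}_0=\mathfrak{p}\oplus J\mathfrak{p}$, $J$ is integrable if and only if $S(z)$ commutes with $J_{\mathfrak{v}}$ for all $z\in\mathfrak{p}$.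
   Context: $N_J(x,y)=[x,y]+J([Jx,y]+[x,Jy])-[Jx,Jy]$. A Lie algebra $\mathfrak{n}$ is $2$-step nilpotent if it is non-abelian and $\mathfrak{n}'=[\mathfrak{n},\mathfrak{n}]\subset\mathfrak{z}$. *)

(* Defs.v *)
From HB Require Import structures.
From mathcomp Require Import all_boot all_order all_algebra.
From mathcomp Require Import boolp classical_sets reals.
Set Implicit Arguments. Unset Strict Implicit. Unset Printing Implicit Defensive.
Import Order.TTheory GRing.Theory Num.Theory.
Local Open Scope ring_scope.

(* A real Lie algebra of dimension m is modelled on 'rV[R]_m (R : realType)
   with a bracket br; linear maps act on row vectors on the right: x *m J. *)

Section Defs.
Variables (R : realType) (m : nat).
Local Notation V := 'rV[R]_m.

Definition is_lie_bracket (br : V -> V -> V) : Prop :=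
  [/\ (forall (a : R) x y w, br (a *: x + y) w = a *: br x w + br y w),
      (forall (a : R) x y w, br w (a *: x + y) = a *: br w x + br w y),
      (forall x, br x x = 0) &
      (forall x y w, br x (br y w) + br y (br w x) + br w (br x y) = 0)].

Definition in_center (br : V -> V -> V) (x : V) : Prop := forall y, br x y = 0.

Definition commutator (br : V -> V -> V) : 'M[R]_m :=
  (\sum_(i < m) \sum_(j < m) <<br (delta_mx 0 i) (delta_mx 0 j)>>)%MS.

Definition two_step_nilpotent (br : V -> V -> V) : Prop :=
  (exists x y, br x y != 0) /\
  (forall x, (x <= commutator br)%MS -> in_center br x).

Definition ip (G : 'M[R]_m) (x y : V) : R := (x *m G *m y^T) 0 0.

Definition is_inner_product (G : 'M[R]_m) : Prop :=
  G^T = G /\ (forall x : V, x != 0 -> 0 < ip G x x).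

Definition nijenhuis (br : V -> V -> V) (J : 'M[R]_m) (x y : V) : V :=
  br x y + (br (x *m J) y + br x (y *m J)) *m J - br (x *m J) (y *m J).

Definition integrable (br : V -> V -> V) (J : 'M[R]_m) : Prop :=
  forall x y, nijenhuis br J x y = 0.

Definition z0 (br : V -> V -> V) (J : 'M[R]_m) : 'M[R]_m :=
  (commutator br + commutator br *m J)%MS.

Definition in_v (br : V -> V -> V) (J G : 'M[R]_m) (x : V) : Prop :=
  forall u, (u <= z0 br J)%MS -> ip G x u = 0.

Definition jmap (br : V -> V -> V) (J G : 'M[R]_m) (z v : V) : V :=
  xget 0 [set u | in_v br J G u /\
                  forall w, in_v br J G w -> ip G u w = ip G z (br v w)].

Definition Smap (br : V -> V -> V) (J G : 'M[R]_m) (z v : V) : V :=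
  jmap br J G (z *m J) v - jmap br J G z v *m J.

Definition S_commutes (br : V -> V -> V) (J G : 'M[R]_m) (z : V) : Prop :=
  forall v, in_v br J G v -> Smap br J G z (v *m J) = Smap br J G z v *m J.

End Defs.

(* Main.v *)
Require Import Defs.
From HB Require Import structures.
From mathcomp Require Import all_boot all_order all_algebra.
From mathcomp Require Import boolp classical_sets reals.
From mathcomp Require Import ring lra.
Import Order.TTheory GRing.Theory Num.Theory.
Local Open Scope ring_scope.
Set Implicit Arguments. Unset Strict Implicit. Unset Printing Implicit Defensive.

Section Aux.
Variables (R : realType) (m : nat).
Local Notation V := 'rV[R]_m.
Variable (br : V -> V -> V) (J G : 'M[R]_m).
Hypothesis Hbr : is_lie_bracket br.
Hypothesis HJ : J *m J = - 1%:M.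
Hypothesis HG : is_inner_product G.
Hypothesis HGJ : forall x y, ip G (x *m J) (y *m J) = ip G x y.

Lemma br0l w : br 0 w = 0.
Proof.
case: Hbr => H _ _ _; have := H 1 0 0 w.
by rewrite !scale1r addr0 => /esym/eqP; rewrite -subr_eq0 addrK => /eqP.
Qed.
Lemma br0r w : br w 0 = 0.
Proof.
case: Hbr => _ H _ _; have := H 1 0 0 w.
by rewrite !scale1r addr0 => /esym/eqP; rewrite -subr_eq0 addrK => /eqP.
Qed.
Lemma brDl x y w : br (x + y) w = br x w + br y w.
Proof. by case: Hbr => H _ _ _; have := H 1 x y w; rewrite !scale1r. Qed.
Lemma brDr x y w : br w (x + y) = br w x + br w y.
Proof. by case: Hbr => _ H _ _; have := H 1 x y w; rewrite !scale1r. Qed.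
Lemma brZl a x w : br (a *: x) w = a *: br x w.
Proof. by case: Hbr => H _ _ _; rewrite -[a *: x]addr0 H br0l addr0. Qed.
Lemma brZr a x w : br w (a *: x) = a *: br w x.
Proof. by case: Hbr => _ H _ _; rewrite -[a *: x]addr0 H br0r addr0. Qed.
Lemma brNl x w : br (- x) w = - br x w.
Proof. by rewrite -scaleN1r brZl scaleN1r. Qed.
Lemma brNr x w : br w (- x) = - br w x.
Proof. by rewrite -scaleN1r brZr scaleN1r. Qed.
Lemma brC x y : br x y = - br y x.
Proof.
case: Hbr => _ _ H _; have := H (x + y).
rewrite brDl !brDr !H add0r addr0 => /eqP; by rewrite addr_eq0 => /eqP.
Qed.

Lemma ipDl x y w : ip G (x + y) w = ip G x w + ip G y w.
Proof. by rewrite /ip !mulmxDl mxE. Qed.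
Lemma ipDr x y w : ip G w (x + y) = ip G w x + ip G w y.
Proof. by rewrite /ip linearD /= mulmxDr mxE. Qed.
Lemma ipZl a x w : ip G (a *: x) w = a * ip G x w.
Proof. by rewrite /ip -!scalemxAl mxE. Qed.
Lemma ipZr a x w : ip G w (a *: x) = a * ip G w x.
Proof. by rewrite /ip linearZ /= -scalemxAr mxE. Qed.
Lemma ipNl x w : ip G (- x) w = - ip G x w.
Proof. by rewrite -scaleN1r ipZl mulN1r. Qed.
Lemma ipNr x w : ip G w (- x) = - ip G w x.
Proof. by rewrite -scaleN1r ipZr mulN1r. Qed.
Lemma ipBl x y w : ip G (x - y) w = ip G x w - ip G y w.
Proof. by rewrite ipDl ipNl. Qed.
Lemma ipBr x y w : ip G w (x - y) = ip G w x - ip G w y.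
Proof. by rewrite ipDr ipNr. Qed.
Lemma ip0l w : ip G 0 w = 0.
Proof. by rewrite /ip !mul0mx mxE. Qed.
Lemma ip0r w : ip G w 0 = 0.
Proof. by rewrite /ip trmx0 mulmx0 mxE. Qed.
Lemma ipC x y : ip G x y = ip G y x.
Proof.
case: HG => HGt _.
rewrite /ip; have -> : (x *m G *m y^T) 0 0 = ((x *m G *m y^T)^T) 0 0 by rewrite [RHS]mxE.
by rewrite !trmx_mul HGt trmxK mulmxA.
Qed.
Lemma ip_eq0 x : ip G x x = 0 -> x = 0.
Proof.
case: HG => _ H Hx; apply/eqP; apply: contraT => /H; by rewrite Hx ltxx.
Qed.
Lemma JJ (x : V) : x *m J *m J = - x.
Proof. by rewrite -mulmxA HJ mulmxN mulmx1. Qed.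
Lemma ipJr x y : ip G x (y *m J) = - ip G (x *m J) y.
Proof. by rewrite -HGJ JJ ipNr. Qed.
Lemma ipJl x y : ip G (x *m J) y = - ip G x (y *m J).
Proof. by rewrite ipJr opprK. Qed.
Hypothesis H2 : two_step_nilpotent br.
Hypothesis HJc : forall x, (x <= commutator br)%MS -> in_center br (x *m J).

Local Notation C := (commutator br).
Local Notation Z := (z0 br J).

Lemma brsuml (I : finType) (F : I -> V) w : br (\sum_i F i) w = \sum_i br (F i) w.
Proof.
apply: (big_rec2 (fun y1 y2 => br y1 w = y2)); first by rewrite br0l.
by move=> i y1 y2 _ <-; rewrite brDl.
Qed.
Lemma brsumr (I : finType) (F : I -> V) w : br w (\sum_i F i) = \sum_i br w (F i).
Proof.
apply: (big_rec2 (fun y1 y2 => br w y1 = y2)); first by rewrite br0r.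
by move=> i y1 y2 _ <-; rewrite brDr.
Qed.

Lemma br_sub a b : (br a b <= C)%MS.
Proof.
rewrite (row_sum_delta a) brsuml; apply: summx_sub => i _; rewrite brZl.
apply: scalemx_sub; rewrite (row_sum_delta b) brsumr; apply: summx_sub => j _.
rewrite brZr; apply: scalemx_sub.
apply: (sumsmx_sup i) => //; apply: (sumsmx_sup j) => //; by rewrite genmxE.
Qed.

Lemma C_Z (x : V) : (x <= C)%MS -> (x <= Z)%MS.
Proof. by move=> h; apply: submx_trans h (addsmxSl _ _). Qed.
Lemma CJ_Z (x : V) : (x <= C)%MS -> (x *m J <= Z)%MS.
Proof. by move=> h; apply: submx_trans (submxMr J h) (addsmxSr _ _). Qed.

Lemma Z_J (x : V) : (x <= Z)%MS -> (x *m J <= Z)%MS.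
Proof.
case/sub_addsmxP => [[u1 u2]] /= ->.
rewrite mulmxDl -!mulmxA HJ !mulmxN mulmx1.
by apply/sub_addsmxP; exists (- u2, u1); rewrite /= mulNmx addrC.
Qed.

Lemma Z_center (x : V) : (x <= Z)%MS -> in_center br x.
Proof.
case/sub_addsmxP => [[u1 u2]] /= -> y.
rewrite brDl mulmxA.
have -> : br (u1 *m C) y = 0 by case: H2 => _ h; apply: h; apply: submxMl.
by rewrite HJc ?add0r // submxMl.
Qed.

Lemma brZ0l (x y : V) : (x <= Z)%MS -> br x y = 0.
Proof. by move/Z_center. Qed.
Lemma brZ0r (x y : V) : (x <= Z)%MS -> br y x = 0.
Proof. by move/Z_center=> h; rewrite brC h oppr0. Qed.

Lemma Z_add (x y : V) : (x <= Z)%MS -> (y <= Z)%MS -> ((x + y)%R <= Z)%MS.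
Proof. exact: addmx_sub. Qed.
Lemma Z_opp (x : V) : (x <= Z)%MS -> (- x <= Z)%MS.
Proof. by move=> h; rewrite -scaleN1r scalemx_sub. Qed.

Lemma N_Z (x y : V) : (nijenhuis br J x y <= Z)%MS.
Proof.
rewrite /nijenhuis; apply: Z_add; last by apply: Z_opp; apply: C_Z; apply: br_sub.
apply: Z_add; first by apply: C_Z; apply: br_sub.
by apply: CJ_Z; apply: addmx_sub; apply: br_sub.
Qed.

Lemma N_shiftl (x y c : V) : (c <= Z)%MS -> nijenhuis br J (x + c) y = nijenhuis br J x y.
Proof.
move=> hc; have hcJ := Z_J hc.
have h1 t : br c t = 0 by apply: brZ0l.
have h2 t : br (c *m J) t = 0 by apply: brZ0l.
by rewrite /nijenhuis !mulmxDl !brDl !h1 !h2 !addr0.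
Qed.
Lemma N_shiftr (x y c : V) : (c <= Z)%MS -> nijenhuis br J x (y + c) = nijenhuis br J x y.
Proof.
move=> hc; have hcJ := Z_J hc.
have h1 t : br t c = 0 by apply: brZ0r.
have h2 t : br t (c *m J) = 0 by apply: brZ0r.
by rewrite /nijenhuis !mulmxDl !brDr !h1 !h2 !addr0.
Qed.

Lemma N_Jl (x y : V) : nijenhuis br J (x *m J) y = - (nijenhuis br J x y *m J).
Proof.
rewrite /nijenhuis !JJ !brNl !mulmxDl !mulNmx !JJ !opprD !opprK.
set a := br x y; set b := br (x *m J) y; set c := br x (y *m J).
set d := br (x *m J) (y *m J).
by rewrite !addrA [b + - _]addrC -[_ + _ *m J + c]addrA [_ *m J + c]addrC !addrA.
Qed.

Local Notation inv := (in_v br J G).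
Local Notation j := (jmap br J G).

Lemma in_v0 : inv 0.
Proof. by move=> u _; rewrite ip0l. Qed.
Lemma in_vD (x y : V) : inv x -> inv y -> inv (x + y).
Proof. by move=> hx hy u hu; rewrite ipDl hx // hy // addr0. Qed.
Lemma in_vN (x : V) : inv x -> inv (- x).
Proof. by move=> hx u hu; rewrite ipNl hx // oppr0. Qed.
Lemma in_vB (x y : V) : inv x -> inv y -> inv (x - y).
Proof. by move=> hx hy; apply: in_vD => //; apply: in_vN. Qed.
Lemma in_vJ (x : V) : inv x -> inv (x *m J).
Proof. by move=> hx u hu; rewrite ipJl hx ?oppr0 // Z_J. Qed.

Lemma G_free : row_free G.
Proof.
rewrite -kermx_eq0 -submx0; apply/row_subP => i.
set r := row i _.
have : (r <= kermx G)%MS by apply: row_sub.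
rewrite sub_kermx => /eqP hr.
have -> : r = 0 by apply: ip_eq0; rewrite /ip hr mul0mx mxE.
by rewrite sub0mx.
Qed.

Local Notation K := (kermx (G *m (z0 br J)^T)).

Lemma K_v (x : V) : (x <= K)%MS -> inv x.
Proof.
rewrite sub_kermx mulmxA => /eqP h u /submxP [D ->].
by rewrite /ip trmx_mul mulmxA h mul0mx mxE.
Qed.

Lemma decomp (x : V) : exists xv xz, [/\ inv xv, (xz <= Z)%MS & x = xv + xz].
Proof.
have cap0 : (K :&: Z)%MS = 0.
  apply/eqP; rewrite -submx0; apply/row_subP => i.
  set r := row i _.
  have hr : (r <= K :&: Z)%MS by apply: row_sub.
  rewrite sub_capmx in hr; case/andP: hr => h1 h2.
  have -> : r = 0 by apply: ip_eq0; apply: (K_v h1).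
  by rewrite sub0mx.
have full : row_full (K + Z)%MS.
  rewrite /row_full; apply/eqP.
  have := mxrank_sum_cap K Z; rewrite cap0 mxrank0 addn0 => ->.
  rewrite mxrank_ker.
  have -> : \rank (G *m Z^T) = \rank Z.
    case: HG => HGt _.
    by rewrite -[G]HGt -trmx_mul mxrank_tr mxrankMfree // G_free.
  by rewrite subnK // rank_leq_col.
have : (x <= K + Z)%MS by apply: submx_full.
case/sub_addsmxP => [[u1 u2]] /= ->.
exists (u1 *m K), (u2 *m Z); split => //; first by apply: K_v; apply: submxMl.
exact: submxMl.
Qed.

Lemma ipsumr (I : finType) (F : I -> V) w : ip G w (\sum_i F i) = \sum_i ip G w (F i).
Proof.
apply: (big_rec2 (fun y1 y2 => ip G w y1 = y2)); first by rewrite ip0r.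
by move=> i y1 y2 _ <-; rewrite ipDr.
Qed.

Lemma jP z v : inv (j z v) /\ forall w, inv w -> ip G (j z v) w = ip G z (br v w).
Proof.
rewrite /jmap; apply: (xgetPex 0 (P := [set u | inv u /\ forall w, inv w -> ip G u w = ip G z (br v w)])).
pose c : V := \row_i ip G z (br v 'e_i).
pose a := c *m invmx G.
have Gu : G \in unitmx by rewrite -row_free_unit G_free.
have ha w : ip G a w = ip G z (br v w).
  rewrite /ip /a mulmxKV // mxE [in RHS](row_sum_delta w) brsumr.
  rewrite -/(ip G z _) ipsumr; apply: eq_bigr => k _.
  by rewrite !mxE brZr ipZr mulrC.
have [av [az [hav haz ea]]] := decomp a.
exists av; split => // w hw.
have -> : av = a - az by rewrite ea addrK.
by rewrite ipBl ha [ip G az w]ipC hw // subr0.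
Qed.

Lemma key z v w : inv v -> inv w ->
  ip G z (nijenhuis br J v w) = ip G (Smap br J G z v *m J - Smap br J G z (v *m J)) w.
Proof.
move=> hv hw; have hwJ := in_vJ hw.
rewrite /nijenhuis /Smap ipBr ipDr ipJr ipDr.
rewrite -((jP z v).2 w hw) -((jP (z *m J) (v *m J)).2 w hw).
rewrite -((jP (z *m J) v).2 _ hwJ) -((jP z (v *m J)).2 _ hwJ) !ipJr.
rewrite !mulmxBl JJ !ipBl ipNl.
ring.
Qed.

Lemma Lchar z : S_commutes br J G z <->
  (forall v w, inv v -> inv w -> ip G z (nijenhuis br J v w) = 0).
Proof.
split.
  by move=> hS v w hv hw; rewrite key // hS // subrr ip0l.
move=> h v hv.
set E := Smap br J G z v *m J - Smap br J G z (v *m J).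
have hS u : inv (Smap br J G z u).
  by apply: in_vB; [exact: (jP _ _).1 | apply: in_vJ; exact: (jP _ _).1].
have hE : inv E by apply: in_vB; [apply: in_vJ |].
have : E = 0 by apply: ip_eq0; rewrite -key ?h // in_vJ.
by move/eqP; rewrite subr_eq0 => /eqP.
Qed.

Lemma main11 :
  (integrable br J <->
     (forall z, (z <= z0 br J)%MS -> S_commutes br J G z)) /\
  (forall P : 'M[R]_m,
     (P <= z0 br J)%MS ->
     (P + P *m J == z0 br J)%MS ->
     mxdirect (P + P *m J) ->
     (integrable br J <-> (forall z, (z <= P)%MS -> S_commutes br J G z))).
Proof.
have part1 : integrable br J <->
     (forall z, (z <= z0 br J)%MS -> S_commutes br J G z).
  split.
    move=> hI z hz; apply/Lchar => v w _ _.
    by rewrite hI ip0r.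
  move=> h x y.
  have [xv [xz [hxv hxz ->]]] := decomp x.
  have [yv [yz [hyv hyz ->]]] := decomp y.
  rewrite N_shiftl // N_shiftr //.
  apply: ip_eq0.
  apply: (Lchar _).1 => //.
  by apply: h; apply: N_Z.
split => // P hPZ hPe _.
rewrite part1; split.
  by move=> h z hz; apply: h; apply: submx_trans hz hPZ.
move=> hP z hz.
move/eqmxP: hPe => e.
have : (z <= P + P *m J)%MS by rewrite e.
case/sub_addsmxP => [[u1 u2]] /= ->.
apply/Lchar => v w hv hw.
rewrite ipDl mulmxA ipJl.
rewrite -[nijenhuis br J v w *m J]opprK -N_Jl ipNr opprK.
rewrite (Lchar _).1 ?add0r //; first last.
  by apply: hP; apply: submxMl.
rewrite (Lchar _).1 //; first by apply: hP; apply: submxMl.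
exact: in_vJ.
Qed.
End Aux.

Theorem mainTheorem11 (R : realType) (m : nat)
    (br : 'rV[R]_m -> 'rV[R]_m -> 'rV[R]_m) (J G : 'M[R]_m) :
  is_lie_bracket br ->
  two_step_nilpotent br ->
  J *m J = - 1%:M ->
  (forall x, (x <= commutator br)%MS -> in_center br (x *m J)) ->
  is_inner_product G ->
  (forall x y, ip G (x *m J) (y *m J) = ip G x y) ->
  (integrable br J <->
     (forall z, (z <= z0 br J)%MS -> S_commutes br J G z)) /\
  (forall P : 'M[R]_m,
     (P <= z0 br J)%MS ->
     (P + P *m J == z0 br J)%MS ->
     mxdirect (P + P *m J) ->
     (integrable br J <-> (forall z, (z <= P)%MS -> S_commutes br J G z))).
Proof.
move=> Hbr H2 HJ HJc HG HGJ.
exact: (main11 Hbr HJ HG HGJ H2 HJc).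
Qed.
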